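(* Let $\widetilde{C}(\boldsymbol{\theta},\varepsilon)$ denote a noisy cost function at noise level $\varepsilon$, and let $a_1>1$ be a boost factor with perfect access to the noise level $a_1\varepsilon$. Consider a Zero Noise Extrapolation estimator with two noise levels $$C_m(\boldsymbol{\theta})=\frac{A\,\widetilde{C}(\boldsymbol{\theta},\varepsilon)-B\,\widetilde{C}(\boldsymbol{\theta},a_1\varepsilon)}{D}+E,$$ with real constants $A,B,D,E$ independent of $\boldsymbol{\theta}$, $D\ne0$, and ratio $c=A/B$ equal to $a_1$ (Richardson extrapolation), $a_1r(\varepsilon)^{t(\varepsilon)}/r(a_1\varepsilon)^{t(a_1\varepsilon)}$ (exponential extrapolation, with $r,t$ the positive functions of the noise level in the exponential noise model), or $a_1^{-(L+1)}$ (NIBP extrapolation, $L$ being the circuit depth). Assume $C_m$ is estimated from independent estimates of the two noisy costs and that the variance of the boosted-noise estimate is never smaller than that of the base-noise estimate, so that the error mitigation cost satisfies $\gamma\ge(A^2+B^2)/D^2$. Let $\boldsymbol{\theta}_{\varepsilon*}$ be a global minimizer of $\widetilde{C}(\cdot,\varepsilon)$ over the accessible parameters, let $\langle\cdot\rangle_i$ denote the average over accessible parameter vectors $\boldsymbol{\theta}_i$, write $\Delta\widetilde{C}(\boldsymbol{\theta}_{i,\varepsilon*},x)=\widetilde{C}(\boldsymbol{\theta}_i,x)-\widetilde{C}(\boldsymbol{\theta}_{\varepsilon*},x)$, $\Delta C_m(\boldsymbol{\theta}_{i,\varepsilon*})=C_m(\boldsymbol{\theta}_i)-C_m(\boldsymbol{\theta}_{\varepsilon*})$,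 assume $\langle\Delta\widetilde{C}(\boldsymbol{\theta}_{i,\varepsilon*},\varepsilon)\rangle_i\neq0$, and set $$z=\frac{\langle\Delta\widetilde{C}(\boldsymbol{\theta}_{i,\varepsilon*},a_1\varepsilon)\rangle_i}{\langle\Delta\widetilde{C}(\boldsymbol{\theta}_{i,\varepsilon*},\varepsilon)\rangle_i}.$$ Then the average relative resolvability satisfies $$\overline{\chi}\le\frac{(z-c)^2}{c^2+1}.$$ Consequently, if $z\le1$ and $\langle\Delta\widetilde{C}(\boldsymbol{\theta}_{i,\varepsilon*},a_1\varepsilon)\rangle_i\ge0$, then $\overline{\chi}\le1$ for each of the three extrapolation strategies.
   Context: The average relative resolvability is $\overline{\chi}=\frac{1}{\gamma}\Big(\frac{\langle\Delta C_m(\boldsymbol{\theta}_{i,\varepsilon*})\rangle_i}{\langle\Delta\widetilde{C}(\boldsymbol{\theta}_{i,\varepsilon*},\varepsilon)\rangle_i}\Big)^2$, where $\gamma$ is the error mitigation cost, i.e. the ratio of the variance of the mitigated estimate to the variance of the unmitigated noisy estimate. *)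

(* Defs.v *)
From HB Require Import structures.
From mathcomp Require Import all_boot all_order all_algebra.
From mathcomp Require Import reals exp.
Set Implicit Arguments. Unset Strict Implicit. Unset Printing Implicit Defensive.
Import Order.TTheory GRing.Theory Num.Theory.
Local Open Scope ring_scope.

Section ZNE.
Variable R : realType.

Inductive zne_strategy :=
  | Richardson
  | Exponential of (R -> R) & (R -> R)  (* r, t : positive functions of noise level *)
  | NIBP of nat.                        (* circuit depth L *)

Definition strategy_ok (s : zne_strategy) : Prop :=
  match s with
  | Exponential r t => forall x, 0 < r x /\ 0 < t x
  | _ => True
  end.

Definition ratio_c (s : zne_strategy) (a1 eps : R) : R :=
  match s with
  | Richardson => a1
  | Exponential r t =>
      a1 * (r eps `^ t eps) / (r (a1 * eps) `^ t (a1 * eps))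
  | NIBP L => a1 ^- L.+1
  end.

Definition avg (T : finType) (f : T -> R) : R := (\sum_(i : T) f i) / #|T|%:R.

Definition Cm (T : Type) (Ct : T -> R -> R) (A B D E a1 eps : R) (th : T) : R :=
  (A * Ct th eps - B * Ct th (a1 * eps)) / D + E.

Definition Delta (T : Type) (f : T -> R) (ths th : T) : R := f th - f ths.

(* Error mitigation cost: Var(mitigated estimate) / Var(unmitigated noisy estimate),
   where the mitigated estimate is built from independent estimates of the two
   noisy costs with variances v1 (base noise) and v2 (boosted noise). *)
Definition mitigation_cost (A B D v1 v2 : R) : R :=
  ((A ^+ 2 * v1 + B ^+ 2 * v2) / D ^+ 2) / v1.

Definition chibar (gamma num den : R) : R := gamma^-1 * (num / den) ^+ 2.

End ZNE.

(* Main.v *)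
Require Import Defs.
From HB Require Import structures.
From mathcomp Require Import all_boot all_order all_algebra.
From mathcomp Require Import reals exp.
From mathcomp Require Import ring lra.
Import Order.TTheory GRing.Theory Num.Theory.
Local Open Scope ring_scope.

Lemma avg_lin (R : realType) (T : finType) (f g : T -> R) (a b d : R) :
  avg (fun i => (a * f i - b * g i) / d) = (a * avg f - b * avg g) / d.
Proof.
rewrite /avg -mulr_suml sumrB -!mulr_sumr; ring.
Qed.

Theorem proposition2 (R : realType) (Theta : finType) (Ct : Theta -> R -> R)
  (eps a1 A B D E v1 v2 : R) (s : zne_strategy R) (ths : Theta) :
  0 < eps -> 1 < a1 -> D != 0 -> B != 0 ->
  strategy_ok s -> A / B = ratio_c s a1 eps ->
  0 < v1 -> v1 <= v2 ->
  (forall th, Ct ths eps <= Ct th eps) ->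
  avg (fun th => Delta (fun x => Ct x eps) ths th) != 0 ->
  let dC1 := avg (fun th => Delta (fun x => Ct x eps) ths th) in
  let dC2 := avg (fun th => Delta (fun x => Ct x (a1 * eps)) ths th) in
  let dCm := avg (fun th => Delta (Cm Ct A B D E a1 eps) ths th) in
  let gamma := mitigation_cost A B D v1 v2 in
  let c := A / B in
  let z := dC2 / dC1 in
  chibar gamma dCm dC1 <= (z - c) ^+ 2 / (c ^+ 2 + 1) /\
  (z <= 1 -> 0 <= dC2 -> chibar gamma dCm dC1 <= 1).
Proof.
move=> he ha1 hD hB hs hc hv1 hv12 hmin hdC1 dC1 dC2 dCm gamma c z.
have hA : A = c * B by rewrite /c divfK.
have hdCm : dCm = (A * dC1 - B * dC2) / D.
  rewrite /dCm /dC1 /dC2 -avg_lin; rewrite /avg; congr (_ / _); apply: eq_bigr => th _.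
  rewrite /Delta /Cm; field; exact: hD.
have hq : dCm / dC1 = B * (c - z) / D.
  rewrite hdCm /z hA; field; apply/andP; split => //.
have hc0 : 0 < c.
  rewrite /c hc; case: s hs {hc hA hdCm hq c z} => [|r t|L] /= hs.
  - lra.
  - have [hr1 ht1] := hs eps; have [hr2 ht2] := hs (a1 * eps).
    apply: divr_gt0; first apply: mulr_gt0; try lra; exact: powR_gt0.
  - by rewrite invr_gt0 exprn_gt0 //; lra.
have hB2 : 0 < B ^+ 2 by rewrite exprn_even_gt0.
have hD2 : 0 < D ^+ 2 by rewrite exprn_even_gt0.
set g0 := B ^+ 2 * (c ^+ 2 + 1) / D ^+ 2.
have hg0 : 0 < g0.
  rewrite /g0; apply: divr_gt0 => //; apply: mulr_gt0 => //.
  have := sqr_ge0 c; lra.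
have hgam : g0 <= gamma.
  rewrite -subr_ge0.
  have -> : gamma - g0 = B ^+ 2 * (v2 - v1) / (D ^+ 2 * v1).
    rewrite /gamma /mitigation_cost /g0 hA; field.
    by rewrite hD lt0r_neq0.
  apply: divr_ge0; first by apply: mulr_ge0; [exact: ltW | lra].
  by apply: mulr_ge0; apply: ltW.
have hgp : 0 < gamma := lt_le_trans hg0 hgam.
have hchi : chibar gamma dCm dC1 <= (z - c) ^+ 2 / (c ^+ 2 + 1).
  rewrite /chibar hq.
  apply: (@le_trans _ _ (g0^-1 * (B * (c - z) / D) ^+ 2)).
    by apply: ler_wpM2r; [exact: sqr_ge0 | rewrite lef_pV2].
  rewrite le_eqVlt; apply/orP; left; apply/eqP.
  have hc21 : 0 < c ^+ 2 + 1 by have := sqr_ge0 c; lra.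
  by rewrite /g0; field; rewrite hD hB gt_eqF.
split => // hz hdC2.
apply: (le_trans hchi).
have hdC1p : 0 < dC1.
  rewrite lt_def hdC1 /dC1 /avg divr_ge0 //; apply: sumr_ge0 => i _.
  by rewrite /Delta subr_ge0.
have hz0 : 0 <= z by rewrite /z divr_ge0 // ltW.
have hc2 : 0 < c ^+ 2 + 1 by have := sqr_ge0 c; lra.
rewrite ler_pdivrMr // mul1r.
have : z * z <= 1 by nra.
have : 0 <= z * c by nra.
rewrite sqrrB !expr2; lra.
Qed.
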